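(* Let $G=(V,E)$ be a finite simple undirected graph and $K$ a nonnegative integer. Construct an edge-labeled graph $G'$ with three categories red, blue, green as follows: its nodes are $V$ together with, for each edge $\{u,v\}\in E$ (with an arbitrary choice of which endpoint is called $u$), four new auxiliary nodes $a,b,c,d$ specific to that edge; for each edge $\{u,v\}\in E$ add the six labeled edges $\{u,c\}$ blue, $\{c,d\}$ green, $\{d,v\}$ red, $\{v,b\}$ blue, $\{b,a\}$ green, $\{a,u\}$ red. Then there exists a partition of $V$ into two sets with at least $K$ edges of $G$ crossing the partition if and only if there exists an assignment $Y$ of the nodes of $G'$ to the three colors with $\mathrm{CatEdgeClus}(Y)\le 4|E|-K$.
   Context: For an edge-labeled graph with node set $V'$, edge collection $E'$, categories $C$ and labeling $\ell:E'\to C$, and a node coloring $Y:V'\to C$, an edge $e$ is a mistake ($m_Y(e)=1$) if some endpoint $i\in e$ has $Y[i]\neq\ell(e)$, and $m_Y(e)=0$ otherwise; $\mathrm{CatEdgeClus}(Y)=\sum_{e\in E'}m_Y(e)$ is the number of mistakes. *)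

(* Defs.v *)
From mathcomp Require Import all_boot.
Set Implicit Arguments. Unset Strict Implicit. Unset Printing Implicit Defensive.

(* An edge-labeled graph: node type N, finite edge collection Ed (a finType,
   so parallel edges are allowed as in "edge collection"), each edge e having
   the two endpoints (ends e).1, (ends e).2, and a label lab e in C. *)
Definition mistake (N C : eqType) (Ed : Type) (ends : Ed -> N * N)
  (lab : Ed -> C) (Y : N -> C) (e : Ed) : bool :=
  (Y (ends e).1 != lab e) || (Y (ends e).2 != lab e).

Definition CatEdgeClus (N C : eqType) (Ed : finType) (ends : Ed -> N * N)
  (lab : Ed -> C) (Y : N -> C) : nat :=
  \sum_(e : Ed) nat_of_bool (mistake ends lab Y e).

(* The orientation (src = u,
   dst = v) is the paper's arbitrary choice of which endpoint is called u. *)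
Definition simple_graph (V E : finType) (src dst : E -> V) : Prop :=
  (forall e, src e != dst e) /\
  (forall e1 e2, ((src e1 == src e2) && (dst e1 == dst e2)) ||
                 ((src e1 == dst e2) && (dst e1 == src e2)) -> e1 = e2).

Definition cut_size (V E : finType) (src dst : E -> V) (S : {set V}) : nat :=
  #|[set e : E | (src e \in S) != (dst e \in S)]|.

Definition color := 'I_3.
Definition red : color := @Ordinal 3 0 isT.
Definition blue : color := @Ordinal 3 1 isT.
Definition green : color := @Ordinal 3 2 isT.

(* nodes of G': original vertices, plus four auxiliary nodes per edge;
   auxiliary index 0,1,2,3 stands for a,b,c,d *)
Definition gnode (V E : finType) : finType := (V + (E * 'I_4))%type.

Definition aux (V E : finType) (e : E) (k : nat) : gnode V E :=
  inr (e, inord k).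

Definition gedge (E : finType) : finType := (E * 'I_6)%type.

Definition gends (V E : finType) (src dst : E -> V) (f : gedge E)
  : gnode V E * gnode V E :=
  let: (e, j) := f in
  let u : gnode V E := inl (src e) in
  let v : gnode V E := inl (dst e) in
  let a := aux V e 0 in let b := aux V e 1 in
  let c := aux V e 2 in let d := aux V e 3 in
  match nat_of_ord j with
  | 0 => (u, c)
  | 1 => (c, d)
  | 2 => (d, v)
  | 3 => (v, b)
  | 4 => (b, a)
  | _ => (a, u)
  end.

Definition glab (E : finType) (f : gedge E) : color :=
  match nat_of_ord f.2 with
  | 0 => blue | 1 => green | 2 => red
  | 3 => blue | 4 => green | _ => red
  end.

(* Main.v *)
Require Import Defs.
From mathcomp Require Import all_boot all_order all_algebra.
Import GRing.Theory Num.Theory.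

Definition gad (yu yv ya yb yc yd : color) : nat :=
  ((yu != blue) || (yc != blue)) + ((yc != green) || (yd != green)) +
  ((yd != red) || (yv != red)) + ((yv != blue) || (yb != blue)) +
  ((yb != green) || (ya != green)) + ((ya != red) || (yu != red)).

Lemma gad_lb (yu yv ya yb yc yd : color) :
  (4 <= gad yu yv ya yb yc yd + ((yu == blue) != (yv == blue)))%N.
Proof.
by case: yu => [[|[|[|]]] ?] //; case: yv => [[|[|[|]]] ?] //;
   case: ya => [[|[|[|]]] ?] //; case: yb => [[|[|[|]]] ?] //;
   case: yc => [[|[|[|]]] ?] //; case: yd => [[|[|[|]]] ?].
Qed.

Lemma gad_sum (V E : finType) (src dst : E -> V) (Y : gnode V E -> color) (e : E) :
  \sum_(j < 6) nat_of_bool (mistake (gends src dst) (@glab E) Y (e, j)) =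
  gad (Y (inl (src e))) (Y (inl (dst e))) (Y (aux V e 0)) (Y (aux V e 1))
      (Y (aux V e 2)) (Y (aux V e 3)).
Proof.
rewrite !big_ord_recl big_ord0 /gad /mistake /=.
rewrite !addnA addn0.
done.
Qed.

Lemma Clus_sum (V E : finType) (src dst : E -> V) (Y : gnode V E -> color) :
  CatEdgeClus (gends src dst) (@glab E) Y =
  \sum_(e : E) gad (Y (inl (src e))) (Y (inl (dst e))) (Y (aux V e 0)) (Y (aux V e 1))
      (Y (aux V e 2)) (Y (aux V e 3)).
Proof.
rewrite /CatEdgeClus.
rewrite (eq_bigr (fun e => \sum_(j < 6) nat_of_bool (mistake (gends src dst) (@glab E) Y (e, j))));
  last by move=> e _; rewrite gad_sum.
by rewrite pair_big /=; apply: eq_big => // -[].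
Qed.

Lemma cut_sum (V E : finType) (src dst : E -> V) (S : {set V}) :
  cut_size src dst S = \sum_(e : E) nat_of_bool ((src e \in S) != (dst e \in S)).
Proof.
rewrite /cut_size -sum1dep_card big_mkcond /=.
by apply: eq_bigr => e _; case: ifP.
Qed.

Definition col (b : bool) : color := if b then blue else red.

Definition Yaux (bu bv : bool) (k : 'I_4) : color :=
  if bu == bv then green else
  if bu then (match nat_of_ord k with 2 => blue | 3 => red | _ => green end)
  else (match nat_of_ord k with 1 => blue | 0 => red | _ => green end).

Lemma gad_ub (bu bv : bool) :
  (gad (col bu) (col bv) (Yaux bu bv (inord 0)) (Yaux bu bv (inord 1))
      (Yaux bu bv (inord 2)) (Yaux bu bv (inord 3)) + (bu != bv) <= 4)%N.
Proof.
rewrite /Yaux !inordK //.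
by case: bu; case: bv.
Qed.

Theorem mainTheorem4 (V E : finType) (src dst : E -> V) (K : nat) :
  simple_graph src dst ->
  (exists S : {set V}, (K <= cut_size src dst S)%N) <->
  (exists Y : gnode V E -> color,
      ((CatEdgeClus (gends src dst) (@glab E) Y)%:Z
         <= (4 * #|E|)%:Z - K%:Z)%R).
Proof.
move=> _; split.
- case=> S HK.
  pose Y (n : gnode V E) : color := match n with
    | inl x => col (x \in S)
    | inr (e, k) => Yaux (src e \in S) (dst e \in S) k end.
  exists Y.
  have H : (CatEdgeClus (gends src dst) (@glab E) Y + cut_size src dst S <= 4 * #|E|)%N.
    rewrite Clus_sum cut_sum -big_split /=.
    apply: leq_trans (_ : \sum_(e : E) 4 <= _)%N.
      by apply: leq_sum => e _; exact: gad_ub.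
    by rewrite sum_nat_const mulnC.
  rewrite lerBrDr -!PoszD lez_nat.
  exact: leq_trans (leq_add (leqnn _) HK) H.
- case=> Y HY.
  exists [set x | Y (inl x) == blue].
  have H : (4 * #|E| <= CatEdgeClus (gends src dst) (@glab E) Y
           + cut_size src dst [set x | Y (inl x) == blue])%N.
    rewrite Clus_sum cut_sum -big_split /=.
    apply: leq_trans (_ : \sum_(e : E) 4 <= _)%N.
      by rewrite sum_nat_const mulnC.
    by apply: leq_sum => e _; rewrite !inE; exact: gad_lb.
  move: HY; rewrite lerBrDr -!PoszD lez_nat => HY.
  rewrite -(leq_add2l (CatEdgeClus (gends src dst) (@glab E) Y)).
  exact: leq_trans HY H.
Qed.
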